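(* Let $n,t$ be positive integers. Let $T[l,r)$ be a parallel task and let $T[l_s,r_s)$ with $l\le l_s<r_s\le r$ be a sequential task that is a bucket of $T[l,r)$, assigned to thread $i=\min(\lfloor l_st/n\rfloor,\lfloor rt/n\rfloor-1)$. Then $i\,n/t\le l_s<r_s\le (i+2)n/t$, i.e. the task only contains elements of $A[in/t,\,(i+2)n/t-1]$. Consequently (since sequential subtasks of a sequential task are subintervals of it and are processed by the same thread), all sequential tasks processed by thread $i$ only contain elements from $A[in/t,\,(i+2)n/t-1]$, a range of $O(n/t)$ elements.
   Context: An input array $A[0..n-1]$ is sorted by $t$ threads numbered $0,\dots,t-1$. A task $T[l,r)$ (integers $0\le l<r\le n$) refers to the subarray $A[l..r-1]$. Write $\underline{t}=\lfloor lt/n\rfloor$ and $\overline{t}=\lfloor rt/n\rfloor$. The task is a parallel task if $\overline{t}-\underline{t}>1$, executed by threads $\underline{t},\dots,\overline{t}-1$; otherwise ($\overline{t}-\underline{t}\le 1$) it is a sequential task. A sequential task $T[l_s,r_s)$ arising as a bucket of a parallel task $T[l,r)$ is assigned to thread $\min(\lfloor l_st/n\rfloor,\lfloor rt/n\rfloor-1)$; a sequential task is partitioned by its thread into buckets, which become sequential subtasks of the same thread. *)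

(* Defs.v *)
From mathcomp Require Import all_boot.

Definition tidx (n t x : nat) : nat := (x * t) %/ n.

Definition is_task (n l r : nat) : Prop := l < r <= n.

Definition parallel_task (n t l r : nat) : Prop :=
  is_task n l r /\ 1 < tidx n t r - tidx n t l.

Definition sequential_task (n t l r : nat) : Prop :=
  is_task n l r /\ tidx n t r - tidx n t l <= 1.

Definition bucket_thread (n t ls r : nat) : nat :=
  minn (tidx n t ls) (tidx n t r - 1).

(* Main.v *)
Require Import Defs.
From mathcomp Require Import all_boot.
From mathcomp Require Import zify.

Lemma tidx_lo n t x : 0 < n -> tidx n t x * n <= x * t.
Proof. move=> _; rewrite /tidx; exact: leq_divM. Qed.

Lemma tidx_hi n t x : 0 < n -> x * t < (tidx n t x).+1 * n.
Proof. move=> Hn; rewrite /tidx; exact: ltn_ceil. Qed.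

Lemma tidx_mono n t x y : x <= y -> tidx n t x <= tidx n t y.
Proof. move=> H; rewrite /tidx; apply: leq_div2r; exact: leq_mul H (leqnn t). Qed.

Theorem lemma4p6 (n t l r ls rs : nat) :
  0 < n -> 0 < t ->
  parallel_task n t l r ->
  l <= ls -> ls < rs -> rs <= r ->
  sequential_task n t ls rs ->
  let i := bucket_thread n t ls r in
  [/\ i * n <= ls * t,
      rs * t <= i.+2 * n &
      forall l' r', ls <= l' -> l' < r' -> r' <= rs ->
        i * n <= l' * t /\ r' * t <= i.+2 * n].
Proof.
move=> Hn Ht [_ Hp] Hl Hlr Hr [_ Hs] i.
have A1 := tidx_lo n t ls Hn.
have B1 := tidx_hi n t rs Hn.
have R1 := tidx_hi n t r Hn.
have M1 : tidx n t ls <= tidx n t r by apply: tidx_mono; lia.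
have M2 : tidx n t rs <= tidx n t r by apply: tidx_mono.
have K1 : i * n <= ls * t.
  apply: leq_trans A1; apply: leq_mul => //; rewrite /i /bucket_thread; exact: geq_minl.
have K2 : rs * t <= i.+2 * n.
  have Ei : i = minn (tidx n t ls) (tidx n t r - 1) by [].
  rewrite Ei; case: (leqP (tidx n t ls) (tidx n t r - 1)) => H.
  - nia.
  - have -> : (tidx n t r - 1).+2 = (tidx n t r).+1 by lia.
    apply: leq_trans (ltnW R1). exact: leq_mul.
split => // l' r' H1 H2 H3; split.
- nia.
- nia.
Qed.
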